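(* Let $D,\ell,\beta>0$ and $a>0$, and let $h$ solve $\omega_N^2h(x)+2\xi\omega_Nh'(x)+h''(x)=0$ with $h(0)=0$, $h'(0)=1$, where $\omega_N=\frac{\sqrt{a\beta}}{2}$ and $\xi=\frac{D\ell}{4}\sqrt{\beta/a}$. If $$a=\frac{D^2\ell^2\beta}{16}\Big(1-\tanh^2\Big(\frac{D^2\ell\beta}{8}\Big)\Big),$$ then $h'(x)>0$ and $h''(x)<0$ for all $x\in[0,D]$, and $$(h'(D))^{-1}=\frac{e^{D\omega_N\xi}}{\cosh(D\omega_N\sqrt{\xi^2-1})-\frac{\xi}{\sqrt{\xi^2-1}}\sinh(D\omega_N\sqrt{\xi^2-1})}.$$ If $D^2\ell\beta<8$ and $a=\frac{4}{D^2\beta}$, then $h'(x)>0$ and $h''(x)<0$ for all $x\in[0,D]$, and $$(h'(D))^{-1}=\frac{e^{D\omega_N\xi}}{\cos(D\omega_N\sqrt{1-\xi^2})-\frac{\xi}{\sqrt{1-\xi^2}}\sin(D\omega_N\sqrt{1-\xi^2})}.$$ *)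

(* Defs.v *)
From Stdlib Require Import Reals.
Open Scope R_scope.

Definition omegaN (a beta : R) : R := sqrt (a * beta) / 2.
Definition xiN (D l beta a : R) : R := D * l / 4 * sqrt (beta / a).

(* Main.v *)
Require Import Defs.
From Stdlib Require Import Reals Lra Psatz.
From Coquelicot Require Import Coquelicot.
Open Scope R_scope.
Lemma hyp_sol (w xi s : R) : 0 < w -> 0 < s -> s ^ 2 = xi ^ 2 - 1 ->
  (forall x, derivable_pt_lim (fun x => exp (-(w*xi*x)) * sinh (w*s*x) / (w*s)) x
     (exp (-(w*xi*x)) * (cosh (w*s*x) - xi/s*sinh (w*s*x)))) /\
  (forall x, derivable_pt_lim (fun x => exp (-(w*xi*x)) * (cosh (w*s*x) - xi/s*sinh (w*s*x))) x
     (- (w ^ 2 * (exp (-(w*xi*x)) * sinh (w*s*x) / (w*s)) + 2 * xi * w * (exp (-(w*xi*x)) * (cosh (w*s*x) - xi/s*sinh (w*s*x)))))).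
Proof.
  intros hw hs hs2. split; intro x; apply is_derive_Reals; unfold sinh, cosh.
  - auto_derive; auto. field. lra.
  - auto_derive; auto. apply Rminus_diag_uniq.
    transitivity (exp (-(w*xi*x)) * ((exp (w*s*x) - exp (-(w*s*x)))/2) * w * (s^2 - xi^2 + 1) / s).
    + field. lra.
    + rewrite hs2. field. lra.
Qed.
Lemma trig_sol (w xi s : R) : 0 < w -> 0 < s -> s ^ 2 = 1 - xi ^ 2 ->
  (forall x, derivable_pt_lim (fun x => exp (-(w*xi*x)) * sin (w*s*x) / (w*s)) x
     (exp (-(w*xi*x)) * (cos (w*s*x) - xi/s*sin (w*s*x)))) /\
  (forall x, derivable_pt_lim (fun x => exp (-(w*xi*x)) * (cos (w*s*x) - xi/s*sin (w*s*x))) x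
     (- (w ^ 2 * (exp (-(w*xi*x)) * sin (w*s*x) / (w*s)) + 2 * xi * w * (exp (-(w*xi*x)) * (cos (w*s*x) - xi/s*sin (w*s*x)))))).
Proof.
  intros hw hs hs2. split; intro x; apply is_derive_Reals.
  - auto_derive; auto. field. lra.
  - auto_derive; auto. apply Rminus_diag_uniq.
    transitivity (exp (-(w*xi*x)) * sin (w*s*x) * w * (1 - xi^2 - s^2) / s).
    + field. lra.
    + rewrite hs2. field. lra.
Qed.

Lemma uniq0 (w k : R) (g g1 g2 : R -> R) :
  0 < w -> 0 <= k ->
  (forall x, derivable_pt_lim g x (g1 x)) ->
  (forall x, derivable_pt_lim g1 x (g2 x)) ->
  (forall x, w ^ 2 * g x + 2 * k * w * g1 x + g2 x = 0) ->
  g 0 = 0 -> g1 0 = 0 -> forall x, 0 <= x -> g x = 0 /\ g1 x = 0.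
Proof.
  intros hw hk d1 d2 ode g0 g10 x hx.
  set (E := fun t => g1 t * g1 t + w ^ 2 * (g t * g t)).
  set (E' := fun t => (g2 t * g1 t + g1 t * g2 t) + w ^ 2 * (g1 t * g t + g t * g1 t)).
  assert (dE : forall t, derivable_pt_lim E t (E' t)).
  { intro t. unfold E, E'.
    apply derivable_pt_lim_plus.
    - apply derivable_pt_lim_mult; auto.
    - replace (w ^ 2 * (g1 t * g t + g t * g1 t)) with
        (0 * (g t * g t) + w ^ 2 * (g1 t * g t + g t * g1 t)) by ring.
      apply (derivable_pt_lim_mult (fun _ => w ^ 2) (fun t => g t * g t)).
      + apply derivable_pt_lim_const.
      + apply derivable_pt_lim_mult; auto. }
  assert (Ex : E x <= 0).
  { destruct (Req_dec x 0) as [->|hx0].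
    - unfold E. rewrite g0, g10. lra.
    - destruct (MVT_cor2 E E' 0 x ltac:(lra) (fun c _ => dE c)) as [c [Hc _]].
      assert (E0 : E 0 = 0) by (unfold E; rewrite g0, g10; lra).
      assert (E' c <= 0).
      { unfold E'. specialize (ode c).
        replace (g2 c) with (- (w ^ 2 * g c + 2 * k * w * g1 c)) by lra.
        assert (0 <= k * w * (g1 c * g1 c)).
        { apply Rmult_le_pos; [nra | nra]. }
        nra. }
      nra. }
  unfold E in Ex.
  assert (0 <= g1 x * g1 x) by nra.
  assert (0 <= w ^ 2 * (g x * g x)) by (apply Rmult_le_pos; nra).
  assert (g1 x * g1 x = 0) by lra.
  assert (g x * g x = 0).
  { assert (w ^ 2 * (g x * g x) = 0) by lra.
    apply Rmult_integral in H2. destruct H2; [nra|auto]. }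
  split; nra.
Qed.
Lemma generic (D w xi : R) (h h1 h2 u u1 : R -> R) :
  0 < w -> 0 < xi ->
  (forall x, derivable_pt_lim h x (h1 x)) ->
  (forall x, derivable_pt_lim h1 x (h2 x)) ->
  (forall x, w ^ 2 * h x + 2 * xi * w * h1 x + h2 x = 0) ->
  h 0 = 0 -> h1 0 = 1 ->
  (forall x, derivable_pt_lim u x (u1 x)) ->
  (forall x, derivable_pt_lim u1 x (- (w ^ 2 * u x + 2 * xi * w * u1 x))) ->
  u 0 = 0 -> u1 0 = 1 ->
  (forall x, 0 <= x <= D -> 0 < u1 x /\ 0 <= u x) ->
  (forall x, 0 <= x <= D -> 0 < h1 x /\ h2 x < 0) /\ (0 <= D -> h1 D = u1 D).
Proof.
  intros hw hxi d1 d2 ode h0 h10 du du1 u0 u10 pos.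
  assert (U : forall x, 0 <= x -> h x - u x = 0 /\ h1 x - u1 x = 0).
  { apply (uniq0 w xi (fun t => h t - u t) (fun t => h1 t - u1 t)
      (fun t => h2 t - - (w ^ 2 * u t + 2 * xi * w * u1 t))); try lra.
    - intro; apply derivable_pt_lim_minus; auto.
    - intro; apply derivable_pt_lim_minus; auto.
    - intro t; specialize (ode t); lra. }
  split.
  - intros x hx. destruct (U x ltac:(lra)) as [e1 e2]. destruct (pos x hx).
    specialize (ode x). split. lra.
    assert (0 < xi * w * h1 x) by (apply Rmult_lt_0_compat; [nra|lra]).
    assert (0 <= w^2 * h x) by (apply Rmult_le_pos; nra). lra.
  - intro. destruct (U D H). lra.
Qed.
Lemma exp_gt1 (c : R) : 0 < c -> 1 < exp c.
Proof. intro. rewrite <- exp_0. apply exp_increasing. lra. Qed.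

Lemma cosh_pos c : 0 < cosh c.
Proof. unfold cosh. pose proof (exp_pos c). pose proof (exp_pos (-c)). lra. Qed.

Lemma sinh_pos c : 0 < c -> 0 < sinh c.
Proof. intro. unfold sinh. pose proof (exp_increasing (-c) c ltac:(lra)). lra. Qed.

Lemma sinh_nonneg c : 0 <= c -> 0 <= sinh c.
Proof. intro. destruct (Req_dec c 0) as [->|]. unfold sinh. rewrite Ropp_0. lra.
  apply Rlt_le, sinh_pos. lra. Qed.

Lemma cosh_sinh_sq c : cosh c ^ 2 - sinh c ^ 2 = 1.
Proof. unfold cosh, sinh. rewrite exp_Ropp. pose proof (exp_pos c). field. lra. Qed.

Lemma sinh_sub_pos c y : y < c -> 0 < sinh c * cosh y - cosh c * sinh y.
Proof.
  intro H. unfold cosh, sinh. rewrite !exp_Ropp.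
  pose proof (exp_pos c). pose proof (exp_pos y).
  pose proof (exp_increasing y c H).
  replace ((exp c - / exp c) / 2 * ((exp y + / exp y) / 2) -
    (exp c + / exp c) / 2 * ((exp y - / exp y) / 2)) with
    ((exp c * exp c - exp y * exp y) / (2 * (exp c * exp y))) by (field; lra).
  apply Rdiv_lt_0_compat; nra.
Qed.

Theorem lemma13 (D l beta a : R) (h h1 h2 : R -> R)
  (hD : 0 < D) (hl : 0 < l) (hbeta : 0 < beta) (ha : 0 < a)
  (Hd1 : forall x, derivable_pt_lim h x (h1 x))
  (Hd2 : forall x, derivable_pt_lim h1 x (h2 x))
  (Hode : forall x, (omegaN a beta) ^ 2 * h x
                    + 2 * xiN D l beta a * omegaN a beta * h1 x + h2 x = 0)
  (H0 : h 0 = 0) (H1 : h1 0 = 1) :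
  (a = D ^ 2 * l ^ 2 * beta / 16 * (1 - (tanh (D ^ 2 * l * beta / 8)) ^ 2) ->
     (forall x, 0 <= x <= D -> 0 < h1 x /\ h2 x < 0) /\
     / h1 D = exp (D * omegaN a beta * xiN D l beta a) /
       (cosh (D * omegaN a beta * sqrt ((xiN D l beta a) ^ 2 - 1))
        - xiN D l beta a / sqrt ((xiN D l beta a) ^ 2 - 1)
          * sinh (D * omegaN a beta * sqrt ((xiN D l beta a) ^ 2 - 1))))
  /\
  (D ^ 2 * l * beta < 8 -> a = 4 / (D ^ 2 * beta) ->
     (forall x, 0 <= x <= D -> 0 < h1 x /\ h2 x < 0) /\
     / h1 D = exp (D * omegaN a beta * xiN D l beta a) /
       (cos (D * omegaN a beta * sqrt (1 - (xiN D l beta a) ^ 2))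
        - xiN D l beta a / sqrt (1 - (xiN D l beta a) ^ 2)
          * sin (D * omegaN a beta * sqrt (1 - (xiN D l beta a) ^ 2)))).
Proof.
  split.
  - intro Ha.
    set (c := D ^ 2 * l * beta / 8) in Ha.
    assert (0 < D^2) by nra. assert (0 < D^2*l) by nra. assert (0 < D^2*l*beta) by nra.
    assert (hc : 0 < c) by (unfold c; lra).
    pose proof (cosh_pos c) as Cp. pose proof (sinh_pos c hc) as Sp.
    pose proof (cosh_sinh_sq c) as CS.
    assert (Ha' : a = D ^ 2 * l ^ 2 * beta / 16 / cosh c ^ 2).
    { rewrite Ha. unfold tanh.
      transitivity (D ^ 2 * l ^ 2 * beta / 16 * (cosh c ^ 2 - sinh c ^ 2) / cosh c ^ 2).
      field; lra. rewrite CS. field; lra. }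
    set (w := omegaN a beta) in *. set (xi := xiN D l beta a) in *.
    set (s := sqrt (xi ^ 2 - 1)).
    assert (Hw : w = D * l * beta / (8 * cosh c)).
    { unfold w, omegaN. rewrite Ha'.
      replace (D ^ 2 * l ^ 2 * beta / 16 / cosh c ^ 2 * beta) with
        ((D * l * beta / (4 * cosh c)) ^ 2) by (field; lra).
      rewrite sqrt_pow2. field. lra.
      apply Rlt_le, Rdiv_lt_0_compat; [|lra]. apply Rmult_lt_0_compat; [nra|lra]. }
    assert (Hxi : xi = cosh c).
    { unfold xi, xiN. rewrite Ha'.
      replace (beta / (D ^ 2 * l ^ 2 * beta / 16 / cosh c ^ 2)) with
        ((4 * cosh c / (D * l)) ^ 2) by (field; repeat split; nra).
      rewrite sqrt_pow2. field. nra.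
      apply Rlt_le, Rdiv_lt_0_compat; nra. }
    assert (Hs : s = sinh c).
    { unfold s. rewrite Hxi. replace (cosh c ^ 2 - 1) with (sinh c ^ 2) by lra.
      apply sqrt_pow2. lra. }
    assert (hw : 0 < w) by (rewrite Hw; apply Rdiv_lt_0_compat; nra).
    assert (hs : 0 < s) by lra.
    assert (hs2 : s ^ 2 = xi ^ 2 - 1) by (rewrite Hs, Hxi; lra).
    destruct (hyp_sol w xi s hw hs hs2) as [du du1].
    assert (sc : sinh c < cosh c).
    { unfold sinh, cosh. pose proof (exp_pos (-c)). lra. }
    assert (Hwsd : w * s * D < c).
    { rewrite Hw, Hs.
      apply Rlt_le_trans with (D * l * beta / (8 * cosh c) * cosh c * D).
      - apply Rmult_lt_compat_r; [lra|]. apply Rmult_lt_compat_l; [|lra].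
        apply Rdiv_lt_0_compat; nra.
      - right. unfold c. field. apply Rgt_not_eq, cosh_pos. }
    destruct (generic D w xi h h1 h2 _ _ hw ltac:(lra) Hd1 Hd2 Hode H0 H1 du du1)
      as [P Q].
    + rewrite Rmult_0_r, Rmult_0_r, sinh_0. lra.
    + rewrite !Rmult_0_r, Ropp_0, exp_0, cosh_0, sinh_0. field. lra.
    + intros x hx. cbv beta.
      assert (hy0 : 0 <= w * s * x) by (apply Rmult_le_pos; nra).
      assert (hyc : w * s * x < c).
      { apply Rle_lt_trans with (w * s * D); [|lra].
        apply Rmult_le_compat_l; nra. }
      pose proof (exp_pos (- (w * xi * x))).
      split.
      * apply Rmult_lt_0_compat; [lra|].
        pose proof (sinh_sub_pos c (w * s * x) hyc).
        rewrite <- Hs, <- Hxi in H5.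
        replace (cosh (w * s * x) - xi / s * sinh (w * s * x)) with
          ((s * cosh (w * s * x) - xi * sinh (w * s * x)) / s)
          by (field; lra).
        apply Rdiv_lt_0_compat; lra.
      * apply Rmult_le_pos; [|apply Rlt_le, Rinv_0_lt_compat; nra].
        apply Rmult_le_pos; [lra|]. apply sinh_nonneg; lra.
    + split; [exact P|]. rewrite (Q ltac:(lra)).
      rewrite Rinv_mult, <- exp_Ropp, Ropp_involutive.
      replace (D * w * s) with (w * s * D) by ring.
      replace (D * w * xi) with (w * xi * D) by ring.
      reflexivity.
  - intros Hsmall Ha.
    set (w := omegaN a beta) in *. set (xi := xiN D l beta a) in *.
    set (s := sqrt (1 - xi ^ 2)).
    assert (Hw : w = 1 / D).
    { unfold w, omegaN. rewrite Ha.
      replace (4 / (D ^ 2 * beta) * beta) with ((2 / D) ^ 2) by (field; lra).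
      rewrite sqrt_pow2. field. lra.
      apply Rlt_le, Rdiv_lt_0_compat; lra. }
    assert (Hxi : xi = D ^ 2 * l * beta / 8).
    { unfold xi, xiN. rewrite Ha.
      replace (beta / (4 / (D ^ 2 * beta))) with ((D * beta / 2) ^ 2) by (field; lra).
      rewrite sqrt_pow2. field. nra. }
    assert (0 < D^2) by nra. assert (0 < D^2*l) by nra. assert (0 < D^2*l*beta) by nra.
    assert (hxi0 : 0 < xi) by (rewrite Hxi; lra).
    assert (hxi1 : xi < 1) by lra.
    assert (hs2 : s ^ 2 = 1 - xi ^ 2) by (apply pow2_sqrt; nra).
    assert (hs : 0 < s) by (apply sqrt_lt_R0; nra).
    assert (hs1 : s <= 1) by nra.
    assert (hw : 0 < w) by (rewrite Hw; apply Rdiv_lt_0_compat; lra).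
    destruct (trig_sol w xi s hw hs hs2) as [du du1].
    destruct (generic D w xi h h1 h2 _ _ hw hxi0 Hd1 Hd2 Hode H0 H1 du du1)
      as [P Q].
    + rewrite Rmult_0_r, Rmult_0_r, sin_0. lra.
    + rewrite !Rmult_0_r, Ropp_0, exp_0, cos_0, sin_0. field. lra.
    + intros x hx. cbv beta.
      set (y := w * s * x).
      assert (hy0 : 0 <= y) by (unfold y; apply Rmult_le_pos; nra).
      assert (hys : y <= s).
      { unfold y. rewrite Hw. replace (1 / D * s * x) with (s * (x / D)) by (field; lra).
        assert (D * (x / D) = x) by (field; lra).
        assert (0 <= x / D) by (apply Rdiv_le_0_compat; lra).
        assert (x / D <= 1) by nra. nra. }
      pose proof PI2_1.
      assert (cosb : 1 - y ^ 2 / 2 <= cos y).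
      { destruct (cos_bound y 0) as [C _]; try lra.
        replace (1 - y ^ 2 / 2) with (cos_approx y 1); [exact C|].
        unfold cos_approx, cos_term. simpl. field. }
      assert (sinb : sin y <= y).
      { destruct (Req_dec y 0) as [->|]. rewrite sin_0; lra.
        apply Rlt_le, sin_lt_x. lra. }
      assert (sinp : 0 <= sin y) by (apply sin_ge_0; lra).
      pose proof (exp_pos (- (w * xi * x))).
      assert (k : xi < 1 - s ^ 2 / 2) by nra.
      split.
      * apply Rmult_lt_0_compat; [lra|].
        assert (s * (1 - s ^ 2 / 2) <= s * cos y).
        { apply Rmult_le_compat_l; [lra|]. assert (y ^ 2 <= s ^ 2) by nra. lra. }
        assert (s * xi < s * (1 - s ^ 2 / 2)) by (apply Rmult_lt_compat_l; lra).
        assert (xi * sin y <= xi * y) by (apply Rmult_le_compat_l; lra).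
        assert (xi * y <= xi * s) by (apply Rmult_le_compat_l; lra).
        assert (0 < s * cos y - xi * sin y) by lra.
        replace (cos y - xi / s * sin y) with ((s * cos y - xi * sin y) / s)
          by (field; lra).
        apply Rdiv_lt_0_compat; lra.
      * apply Rmult_le_pos; [|apply Rlt_le, Rinv_0_lt_compat; nra].
        apply Rmult_le_pos; lra.
    + split; [exact P|]. rewrite (Q ltac:(lra)).
      rewrite Rinv_mult, <- exp_Ropp, Ropp_involutive.
      replace (D * w * s) with (w * s * D) by ring.
      replace (D * w * xi) with (w * xi * D) by ring.
      reflexivity.
Qed.
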